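(* Let $a\in \mathcal{A}$. Then the following are equivalent: (1) $a$ has a $w$-weighted core inverse. (2) $aw\in \mathcal{A}^{\#}$ and there exists $x\in \mathcal{A}$ such that $xw(aw)^2=aw$, $(wawx)^*=wawx$. (3) $aw\in \mathcal{A}^{\#}$ and there exists $x\in \mathcal{A}$ such that $xw(aw)=aw(aw)^{\#}$, $(wawx)^*=wawx$.
   Context: $\mathcal{A}$ is a complex Banach *-algebra with identity and $w\in\mathcal{A}$. $a$ has a $w$-weighted core inverse if there is $x$ with $a(wx)^2=x$, $(wawx)^*=wawx$, $xw(aw)^2=aw$. $\mathcal{A}^{\#}$ is the set of group invertible elements, $b^{\#}$ the group inverse. *)

(* Defs.v *)
From HB Require Import structures.
From mathcomp Require Import all_boot all_order all_algebra.
Set Implicit Arguments. Unset Strict Implicit. Unset Printing Implicit Defensive.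
Import GRing.Theory.
Local Open Scope ring_scope.

Definition is_involution (A : nzRingType) (star : A -> A) : Prop :=
  [/\ forall x y : A, star (x + y) = star x + star y,
      forall x y : A, star (x * y) = star y * star x
    & forall x : A, star (star x) = x].

Definition group_inverse (A : nzRingType) (b y : A) : Prop :=
  [/\ b * y * b = b, y * b * y = y & b * y = y * b].

Definition group_invertible (A : nzRingType) (b : A) : Prop :=
  exists y, group_inverse b y.

Definition w_core_inverse (A : nzRingType) (star : A -> A) (w a x : A) : Prop :=
  [/\ a * (w * x) ^+ 2 = x,
      star (w * a * w * x) = w * a * w * x
    & x * w * (a * w) ^+ 2 = a * w].

Definition has_w_core_inverse (A : nzRingType) (star : A -> A) (w a : A) : Prop :=
  exists x, w_core_inverse star w a x.

(* Main.v *)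
Require Import Defs.
From mathcomp Require Import all_boot all_order all_algebra.
Import GRing.Theory.
Local Open Scope ring_scope.

Lemma gi (A : nzRingType) (b u v : A) : u*(b*b) = b -> (b*b)*v = b -> group_inverse b (u*u*b).
Proof.
move=> hu hv.
have h1 : b*v = u*b by rewrite -{1}hu -mulrA hv.
have h2 : b*u*b = b by rewrite -mulrA -h1 mulrA hv.
have he : u*b*(u*b) = u*b by rewrite -{2}h1 mulrA -(mulrA u b b) hu h1.
have hby : b*(u*u*b) = u*b.
  transitivity (b*u*(b*v)); first by rewrite h1 !mulrA.
  by rewrite mulrA h2.
have hyb : u*u*b*b = u*b by rewrite -mulrA -(mulrA u) hu.
split.
- by rewrite hby -mulrA hu.
- rewrite -mulrA hby.
  transitivity (u*(u*b*(u*b))); first by rewrite !mulrA.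
  by rewrite he mulrA.
- by rewrite hby hyb.
Qed.

Lemma i12 (A : nzRingType) (star : A -> A) (w a : A) :
  has_w_core_inverse star w a ->
        (group_invertible (a * w) /\
         exists x, x * w * (a * w) ^+ 2 = a * w /\
                   star (w * a * w * x) = w * a * w * x).
Proof.
case=> x [h1 h2 h3]; split; last by exists x.
set b := a * w; set z := x * w.
have hz1 : z * (b * b) = b by rewrite /z -expr2.
have hz2 : z = b * (z * z) by rewrite /z /b -{1}h1 expr2 !mulrA.
have hbzb : b * z * b = b.
  have -> : b * z * b = b * z * (z * (b * b)) by rewrite hz1.
  have -> : b * z * (z * (b * b)) = b * (z * z) * (b * b) by rewrite !mulrA.
  by rewrite -hz2 hz1.
exists (z*z*b); apply: (@gi _ b z (z*z*b) hz1).
have -> : b*b*(z*z*b) = b*(b*(z*z))*b by rewrite !mulrA.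
by rewrite -hz2.
Qed.

Lemma i23 (A : nzRingType) (star : A -> A) (w a : A) :
        (group_invertible (a * w) /\
         exists x, x * w * (a * w) ^+ 2 = a * w /\
                   star (w * a * w * x) = w * a * w * x) ->
      (exists y, group_inverse (a * w) y /\
         exists x, x * w * (a * w) = a * w * y /\
                   star (w * a * w * x) = w * a * w * x).
Proof.
case=> [[y [hy1 hy2 hy3]] [x [hx hs]]]; exists y; split => //.
exists x; split => //.
move: hy1 hy3 hx; set b := a * w => hy1 hy3 hx.
have hb : b = b * b * y by rewrite -mulrA hy3 mulrA hy1.
rewrite expr2 in hx; by rewrite {1}hb mulrA hx.
Qed.

Lemma i31 (A : nzRingType) (star : A -> A) (w a : A) :
      (exists y, group_inverse (a * w) y /\
         exists x, x * w * (a * w) = a * w * y /\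
                   star (w * a * w * x) = w * a * w * x) ->
      has_w_core_inverse star w a.
Proof.
case=> y [[hy1 hy2 hy3] [x [hx hs]]].
move: hy1 hy2 hy3 hx.
set b := a * w => hy1 hy2 hy3 hx.
have hb : a * w = b by [].
clearbody b.
have hbt : forall t, a * (w * t) = b * t by move=> t; rewrite mulrA hb.
have hxt : forall t, x * (w * (b * t)) = b * (y * t).
  by move=> t; rewrite !mulrA hx.
have hxb : x * (w * b) = b * y by rewrite mulrA hx.
have byb : forall t, b * (y * (b * t)) = b * t by move=> t; rewrite !mulrA hy1.
have byb0 : b * (y * b) = b by rewrite mulrA hy1.
have hc : forall t, b * (y * t) = y * (b * t) by move=> t; rewrite !mulrA hy3.
have bby : forall t, b * (b * (y * t)) = b * t by move=> t; rewrite hc byb.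
have bbyy : forall t, b * (b * (y * (y * t))) = b * (y * t) by move=> t; rewrite bby.
exists (b * y * x); split.
- by rewrite expr2 -!mulrA hbt hxt byb bbyy.
- have -> : w * a * w * (b * y * x) = w * a * w * x.
    by rewrite -!mulrA !hbt bby.
  exact: hs.
- by rewrite expr2 -!mulrA hbt hb hxt byb0.
Qed.

Theorem corollary2p5 (A : nzRingType) (star : A -> A)
    (hstar : is_involution star) (w a : A) :
  [/\ (has_w_core_inverse star w a <->
        (group_invertible (a * w) /\
         exists x, x * w * (a * w) ^+ 2 = a * w /\
                   star (w * a * w * x) = w * a * w * x)),
      (group_invertible (a * w) /\
         exists x, x * w * (a * w) ^+ 2 = a * w /\
                   star (w * a * w * x) = w * a * w * x) <->
      (exists y, group_inverse (a * w) y /\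
         exists x, x * w * (a * w) = a * w * y /\
                   star (w * a * w * x) = w * a * w * x)
    & (exists y, group_inverse (a * w) y /\
         exists x, x * w * (a * w) = a * w * y /\
                   star (w * a * w * x) = w * a * w * x) <->
      has_w_core_inverse star w a].
Proof.
split; split.
- exact: i12.
- by move=> h; apply: i31; apply: i23.
- exact: i23.
- by move=> h; apply: i12; apply: i31.
- exact: i31.
- by move=> h; apply: i23; apply: i12.
Qed.
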